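(* Let $S=[S_1,\ldots,S_m]$ be a sequence of propositional formulae and $I,J$ models. Then $I \equiv_S J$ holds if and only if $I \equiv_Q J$ holds for every formula $Q = (B_1 \equiv S_1) \wedge \cdots \wedge (B_m \equiv S_m)$, where every $B_i$ is either $\top$ or $\bot$.
   Context: Models are truth assignments. For a formula $F$: $I \leq_F J$ iff $I \models F$ or $J \not\models F$. For a sequence $S=[S_1,\ldots,S_m]$: $I \leq_S J$ iff either $S=[]$, or ($I \leq_{S_1} J$ and (either $J \not\leq_{S_1} I$ or $I \leq_R J$)), where $R=[S_2,\ldots,S_m]$. $I \equiv_S J$ means $I \leq_S J$ and $J \leq_S I$; for a single formula $Q$, $I\equiv_Q J$ means $I\leq_Q J$ and $J\leq_Q I$. *)

(* Defs.v *)
From Stdlib Require Import List Bool.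
Import ListNotations.

Inductive formula : Type :=
| FVar : nat -> formula
| FTop : formula
| FBot : formula
| FNot : formula -> formula
| FAnd : formula -> formula -> formula
| FOr  : formula -> formula -> formula
| FImp : formula -> formula -> formula
| FIff : formula -> formula -> formula.

Definition model := nat -> bool.

Fixpoint sat (I : model) (F : formula) : Prop :=
  match F with
  | FVar x => I x = true
  | FTop => True
  | FBot => False
  | FNot G => ~ sat I G
  | FAnd G H => sat I G /\ sat I H
  | FOr G H => sat I G \/ sat I H
  | FImp G H => sat I G -> sat I H
  | FIff G H => (sat I G <-> sat I H)
  end.

Definition leF (F : formula) (I J : model) : Prop := sat I F \/ ~ sat J F.

Fixpoint leS (S : list formula) (I J : model) : Prop :=
  match S with
  | [] => True
  | S1 :: R => leF S1 I J /\ (~ leF S1 J I \/ leS R I J)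
  end.

Definition eqS (S : list formula) (I J : model) : Prop := leS S I J /\ leS S J I.
Definition eqF (Q : formula) (I J : model) : Prop := leF Q I J /\ leF Q J I.

Definition const_of (b : bool) : formula := if b then FTop else FBot.

Definition Qform (B : list bool) (S : list formula) : formula :=
  fold_right (fun p acc => FAnd (FIff (const_of (fst p)) (snd p)) acc) FTop
             (combine B S).

(* Main.v *)
Require Import Defs.
From Stdlib Require Import List Classical.
Import ListNotations.

Definition agree (S : list formula) (I J : model) :=
  Forall (fun F => sat I F <-> sat J F) S.

Lemma L1 S I J : eqS S I J <-> agree S I J.
Proof.
  unfold eqS, agree. induction S as [|F R IH]; simpl.
  - split; auto.
  - unfold leF. split.
    + intros [[H1 H2] [H3 H4]]. constructor.
      * destruct (classic (sat I F)), (classic (sat J F)); tauto.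
      * apply IH. destruct (classic (sat I F)), (classic (sat J F)); tauto.
    + intros H; inversion H; subst. apply IH in H3.
      destruct H3. destruct (classic (sat I F)); tauto.
Qed.

Lemma sat_const I b : sat I (const_of b) <-> b = true.
Proof. destruct b; simpl; split; auto; try discriminate; tauto. Qed.

Lemma L2 S I J B : agree S I J -> (sat I (Qform B S) <-> sat J (Qform B S)).
Proof.
  unfold agree, Qform. revert B. induction S as [|F R IH]; intros B H.
  - destruct B; simpl; tauto.
  - destruct B as [|b B]; simpl; [tauto|].
    inversion H; subst. specialize (IH B H3).
    pose proof (sat_const I b); pose proof (sat_const J b). simpl in IH. tauto.
Qed.

Lemma L3 S I : exists B, length B = length S /\ sat I (Qform B S).
Proof.
  unfold Qform. induction S as [|F R IH].
  - exists []; simpl; auto.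
  - destruct IH as [B [HL HS]].
    destruct (classic (sat I F)) as [HF|HF].
    + exists (true :: B); simpl; auto. repeat split; auto.
    + exists (false :: B); simpl; repeat split; auto; tauto.
Qed.

Lemma L4 S I J B : length B = length S -> sat I (Qform B S) -> sat J (Qform B S) -> agree S I J.
Proof.
  unfold agree, Qform. revert B. induction S as [|F R IH]; intros B HL HI HJ.
  - constructor.
  - destruct B as [|b B]; simpl in *; [discriminate|].
    destruct HI as [HI1 HI2], HJ as [HJ1 HJ2].
    constructor.
    + pose proof (sat_const I b); pose proof (sat_const J b). tauto.
    + eapply IH; eauto.
Qed.

Theorem theorem1 (S : list formula) (I J : model) :
  eqS S I J <->
  (forall B : list bool, length B = length S -> eqF (Qform B S) I J).
Proof.
  rewrite L1. split.
  - intros H B _. unfold eqF, leF. pose proof (L2 S I J B H). tauto.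
  - intros H. destruct (L3 S I) as [B [HL HS]].
    apply (L4 S I J B HL HS). destruct (H B HL) as [_ H2]. destruct H2; tauto.
Qed.
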